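(* Let $(\mathcal{X},\rho,\nu)$ be a metric measure space where $\nu$ is a finite Borel measure. Suppose $\mathbb{X}=(X_n)_{n\ge0}$ is uniformly dominated by $\nu$ at rate $\epsilon(\delta)$. Then for any $\epsilon>0$ there exists a region $\mathcal{X}'\subset\mathcal{X}$ of bounded diameter such that, for any nearest neighbor process $(\tilde X_n)_{n\ge1}$, \[\limsup_{N\to\infty}\frac1N\sum_{n=1}^N\mathbb{1}\{X_n\notin\mathcal{X}'\text{ or }\tilde X_n\notin\mathcal{X}'\}<\epsilon\quad\text{almost surely.}\]
   Context: $\mathbb{X}_{<n}=\{X_0,\dots,X_{n-1}\}$; a nearest neighbor process is any $(\tilde X_n)_{n\ge1}$ with $\tilde X_n\in\arg\min_{x\in\mathbb{X}_{<n}}\rho(X_n,x)$. $\mathbb{X}$ is uniformly dominated by $\nu$ if for every $\epsilon>0$ there is $\delta>0$ such that every measurable $A$ with $\nu(A)<\delta$ satisfies $\sup_n\Pr(X_n\in A\mid\mathbb{X}_{<n})<\epsilon$ a.s.; it is uniformly dominated at rate $\epsilon(\cdot)$ if in addition, for every $\delta>0$ and measurable $A$ with $\nu(A)<\delta$, $\sup_n\Pr(X_n\in A\mid\mathbb{X}_{<n})<\epsilon(\delta)$ a.s. *)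

(* Defs.v *)
From HB Require Import structures.
From mathcomp Require Import all_boot all_order all_algebra.
From mathcomp Require Import all_classical all_reals all_analysis.
Set Implicit Arguments. Unset Strict Implicit. Unset Printing Implicit Defensive.
Import Order.TTheory GRing.Theory Num.Theory.
Local Open Scope classical_set_scope.
Local Open Scope ring_scope.

Section defs.
Context {R : realType}.

Definition is_metric {T : Type} (rho : T -> T -> R) : Prop :=
  (forall x y, 0 <= rho x y) /\ (forall x y, rho x y = 0 <-> x = y) /\
  (forall x y, rho x y = rho y x) /\
  (forall x y z, rho x z <= rho x y + rho y z).

Definition rho_open {T : Type} (rho : T -> T -> R) (U : set T) : Prop :=
  forall x, U x -> exists2 r : R, 0 < r & [set y | rho x y < r] `<=` U.

Definition bounded_diam {T : Type} (rho : T -> T -> R) (S : set T) : Prop :=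
  exists M : R, forall x y, S x -> S y -> rho x y <= M.

Definition past_sigma {d dO} {T : measurableType d} {O : measurableType dO}
  (X : nat -> O -> T) (n : nat) : set (set O) :=
  <<s [set B | exists i, (i < n)%N /\ exists2 A, measurable A & B = X i @^-1` A] >>.

(* g is a version of Pr(X_n \in A | X_0, ..., X_{n-1}) *)
Definition is_cond_prob {d dO} {T : measurableType d} {O : measurableType dO}
  (P : probability O R) (X : nat -> O -> T) (n : nat) (A : set T) (g : O -> R) : Prop :=
  (forall B : set R, measurable B -> past_sigma X n (g @^-1` B)) /\
  P.-integrable setT (EFin \o g) /\
  (forall B, past_sigma X n B ->
     P (X n @^-1` A `&` B) = (\int[P]_(w in B) (g w)%:E)%E).

Definition sup_cond_prob_lt {d dO} {T : measurableType d} {O : measurableType dO}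
  (P : probability O R) (X : nat -> O -> T) (A : set T) (c : R) : Prop :=
  exists g : nat -> O -> R, (forall n, is_cond_prob P X n A (g n)) /\
    {ae P, forall w, exists2 b : R, b < c & forall n, g n w <= b}.

Definition unif_dominated {d dO} {T : measurableType d} {O : measurableType dO}
  (P : probability O R) (X : nat -> O -> T) (nu : {measure set T -> \bar R}) : Prop :=
  forall eps : R, 0 < eps -> exists2 delta : R, 0 < delta &
    forall A, measurable A -> (nu A < delta%:E)%E -> sup_cond_prob_lt P X A eps.

Definition unif_dominated_at_rate {d dO} {T : measurableType d} {O : measurableType dO}
  (P : probability O R) (X : nat -> O -> T) (nu : {measure set T -> \bar R})
  (rate : R -> R) : Prop :=
  unif_dominated P X nu /\
  forall delta : R, 0 < delta ->
    forall A, measurable A -> (nu A < delta%:E)%E -> sup_cond_prob_lt P X A (rate delta).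

Definition nn_process {T O : Type} (rho : T -> T -> R) (X Xt : nat -> O -> T) : Prop :=
  forall n w, (0 < n)%N ->
    (exists2 i, (i < n)%N & Xt n w = X i w) /\
    (forall i, (i < n)%N -> rho (X n w) (Xt n w) <= rho (X n w) (X i w)).

End defs.

(* Main.v *)
Require Import Defs.
From HB Require Import structures.
From mathcomp Require Import all_boot all_order all_algebra.
From mathcomp Require Import all_classical all_reals all_analysis.
From mathcomp Require Import zify ring lra.
Import Order.TTheory GRing.Theory Num.Theory.
Local Open Scope classical_set_scope.
Local Open Scope ring_scope.
Section S.
Context {T : pointedType} (G : set (set T)).
Lemma gI A B : <<s G>> A -> <<s G>> B -> <<s G>> (A `&` B).
Proof. exact: (@measurableI _ (g_sigma_algebraType G)). Qed.
Lemma gU A B : <<s G>> A -> <<s G>> B -> <<s G>> (A `|` B).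
Proof. exact: (@measurableU _ (g_sigma_algebraType G)). Qed.
Lemma gC A : <<s G>> A -> <<s G>> (~` A).
Proof. exact: (@measurableC _ (g_sigma_algebraType G)). Qed.
Lemma g0 : <<s G>> set0.
Proof. exact: (@measurable0 _ (g_sigma_algebraType G)). Qed.
Lemma gT : <<s G>> setT.
Proof. exact: (@measurableT _ (g_sigma_algebraType G)). Qed.
End S.

Section chernoff.
Context {R : realType} {dO : measure_display} {O : measurableType dO} (P : probability O R).
Context (G : nat -> set (set O)) (Y : nat -> set O) (c : R).
Context (hGm : forall n, <<s G n>> `<=` measurable)
  (hmono : forall n m, (n <= m)%N -> <<s G n>> `<=` <<s G m>>)
  (hY : forall n, <<s G n.+1>> (Y n))
  (hc : forall n B, <<s G n>> B -> (P (Y n `&` B) <= c%:E * P B)%E)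
  (c0 : 0 <= c).

Definition cnt N w := (\sum_(n < N) (w \in Y n))%N.
Definition Gk N k := [set w | cnt N w = k].
Definition pr (A : set O) := fine (P A).

Lemma prE A : measurable A -> P A = (pr A)%:E.
Proof. by move=> mA; rewrite /pr fineK // fin_num_measure. Qed.

Lemma pr_ge0 A : 0 <= pr A.
Proof. exact/fine_ge0/measure_ge0. Qed.

Lemma prU A B : measurable A -> measurable B -> A `&` B = set0 ->
  pr (A `|` B) = pr A + pr B.
Proof.
move=> mA mB AB; apply/EFin_inj; rewrite -!prE //; last exact: measurableU.
by rewrite EFinD -!prE // measureU.
Qed.

Lemma prDI A B : measurable A -> measurable B -> pr A = pr (A `&` ~` B) + pr (A `&` B).
Proof.
move=> mA mB; apply/EFin_inj; rewrite EFinD -!prE //; last 2 first.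
- exact: measurableI.
- exact/measurableI/measurableC.
exact: measureDI.
Qed.

Lemma pr_le A B : measurable A -> measurable B -> A `<=` B -> pr A <= pr B.
Proof.
move=> mA mB AB; rewrite -lee_fin -!prE //.
by apply: le_measure => //; rewrite inE.
Qed.

Lemma prT : pr setT = 1.
Proof. by rewrite /pr probability_setT. Qed.

Lemma pr0 : pr set0 = 0.
Proof. by rewrite /pr measure0. Qed.

Lemma prc n B : <<s G n>> B -> pr (Y n `&` B) <= c * pr B.
Proof.
move=> GB; have mB := hGm _ _ GB.
have mY : measurable (Y n) := hGm _ _ (hY n).
by rewrite -lee_fin EFinM -!prE //; [exact: hc | exact: measurableI].
Qed.

Lemma cntS N w : cnt N.+1 w = (cnt N w + (w \in Y N))%N.
Proof. by rewrite /cnt big_ord_recr. Qed.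

Lemma cnt_le N w : (cnt N w <= N)%N.
Proof.
rewrite /cnt; elim: N => [|N IH]; first by rewrite big_ord0.
by rewrite big_ord_recr /= -addn1; apply: leq_add IH (leq_b1 _).
Qed.

Lemma cnt0 w : cnt 0%N w = 0%N.
Proof. by rewrite /cnt big_ord0. Qed.

Lemma Gk_in N M k : (N <= M)%N -> <<s G M>> (Gk N k).
Proof.
elim: N M k => [|N IH] M k NM.
  case: k => [|k].
    have -> : Gk 0%N 0%N = setT by apply/seteqP; split=> w //= _; rewrite /Gk /= cnt0.
    exact: gT.
  have -> : Gk 0%N k.+1 = set0.
    by apply/seteqP; split=> w //=; rewrite /Gk /= cnt0.
  exact: g0.
have YM : <<s G M>> (Y N) by exact: (hmono _ _ NM _ (hY N)).
have -> : Gk N.+1 k = (Gk N k `&` ~` Y N) `|` ([set w | (cnt N w).+1 = k] `&` Y N).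
  apply/seteqP; split => w /=; rewrite /Gk /= /cnt big_ord_recr /=;
  case: (pselect (Y N w)) => YN.
  - by rewrite (mem_set YN) addn1 => <-; right.
  - by rewrite (memNset YN) addn0 => <-; left.
  - by rewrite (mem_set YN) addn1 => -[[]|[]].
  - by rewrite (memNset YN) addn0 => -[[]|[]].
apply: gU; first by apply: gI; [apply: IH; lia | exact: gC].
apply: gI => //; case: k => [|k].
  have -> : [set w | (cnt N w).+1 = 0%N] = set0 by apply/seteqP; split.
  exact: g0.
have -> : [set w | (cnt N w).+1 = k.+1] = Gk N k.
  by apply/seteqP; split => w; rewrite /Gk /=; [case | move=> ->].
apply: IH; lia.
Qed.

Lemma Gk_meas N k : measurable (Gk N k).
Proof. exact: (hGm _ _ (@Gk_in N N k (leqnn N))). Qed.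

Lemma Y_meas n : measurable (Y n).
Proof. exact: (hGm _ _ (hY n)). Qed.


Lemma Sk_eq N k : [set w | (cnt N w).+1 = k] = if k is k'.+1 then Gk N k' else set0.
Proof.
case: k => [|k]; first by apply/seteqP; split.
by apply/seteqP; split => w; rewrite /Gk /=; [case | move=> ->].
Qed.

Lemma Sk_meas N k : measurable [set w | (cnt N w).+1 = k].
Proof. by rewrite Sk_eq; case: k => [|k] //; exact: Gk_meas. Qed.

Lemma Gk_S N k : Gk N.+1 k = (Gk N k `&` ~` Y N) `|` ([set w | (cnt N w).+1 = k] `&` Y N).
Proof.
apply/seteqP; split => w /=; rewrite /Gk /= /cnt big_ord_recr /=;
case: (pselect (Y N w)) => YN.
- by rewrite (mem_set YN) addn1 => <-; right.
- by rewrite (memNset YN) addn0 => <-; left.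
- by rewrite (mem_set YN) addn1 => -[[]|[]].
- by rewrite (memNset YN) addn0 => -[[]|[]].
Qed.

Lemma prGkS N k : pr (Gk N.+1 k) =
  pr (Gk N k `&` ~` Y N) + pr ([set w | (cnt N w).+1 = k] `&` Y N).
Proof.
rewrite Gk_S prU //.
- exact/measurableI/measurableC/Y_meas/Gk_meas.
- exact/measurableI/Y_meas/Sk_meas.
- by apply/seteqP; split => w // [[_ + [_ +]]].
Qed.

Definition qq := 1 + (expR 1 - 1) * c.

Lemma e2 : 2 <= expR 1 :> R.
Proof. by have := expR_ge1Dx (1 : R); rewrite (_ : 1 + 1 = 2) //. Qed.

Lemma qq_ge1 : 1 <= qq.
Proof.
rewrite /qq lerDl; apply: mulr_ge0 => //; have := e2; lra.
Qed.

Lemma Gk00 : Gk 0%N 0%N = setT.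
Proof. by apply/seteqP; split=> w //= _; rewrite /Gk /= cnt0. Qed.

Lemma Gk0S k : Gk 0%N k.+1 = set0.
Proof. by apply/seteqP; split=> w //=; rewrite /Gk /= cnt0. Qed.

Lemma step_ineq (E x y : R) : 0 <= E -> 0 <= x -> 0 <= y -> y <= c * (x + y) ->
  E * x + E * expR 1 * y <= qq * (E * (x + y)).
Proof.
move=> E0 x0 y0 yc; have := e2 => e2'.
have h : (expR 1 - 1) * (y - c * (x + y)) <= 0.
  by apply: mulr_ge0_le0; lra.
have h2 : E * ((expR 1 - 1) * (y - c * (x + y))) <= 0 by apply: mulr_ge0_le0.
rewrite /qq; nra.
Qed.

Lemma Mexp_le N L : \sum_(0 <= k < L) expR k%:R * pr (Gk N k) <= qq ^+ N.
Proof.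
have q0 : 0 <= qq by apply: le_trans qq_ge1.
elim: N L => [|N IH] L.
  case: L => [|L]; first by rewrite big_geq.
  rewrite big_nat_recl // Gk00 prT expR0 mulr1 big1 ?addr0 ?expr0 // => i _.
  by rewrite Gk0S pr0 mulr0.
case: L => [|L]; first by rewrite big_geq // exprn_ge0.
under eq_bigr do rewrite prGkS mulrDr.
rewrite big_split /=.
have h2 : \sum_(0 <= k < L.+1) expR k%:R * pr ([set w | (cnt N w).+1 = k] `&` Y N)
   <= \sum_(0 <= k < L.+1) expR k.+1%:R * pr (Gk N k `&` Y N).
  rewrite big_nat_recl // Sk_eq set0I pr0 mulr0 add0r.
  rewrite [leRHS]big_nat_recr //=; apply: ler_wpDr.
    by apply: mulr_ge0; [exact: expR_ge0 | exact: pr_ge0].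
  by apply: ler_sum => i _; rewrite Sk_eq.
apply: le_trans (lerD (lexx _) h2) _.
rewrite -big_split /= exprS.
apply: le_trans (ler_wpM2l q0 (IH L.+1)); rewrite mulr_sumr.
apply: ler_sum => k _.
have mG := Gk_meas N k; have mY := Y_meas N.
rewrite (prDI (Gk N k) (Y N)) // -addn1 natrD expRD.
apply: step_ineq; rewrite ?expR_ge0 ?pr_ge0 //.
rewrite -prDI // setIC; apply: prc; exact: Gk_in.
Qed.

Definition Hc (a : R) N L := [set w | (cnt N w < L)%N /\ a * N%:R <= (cnt N w)%:R].

Lemma cst_meas (Q : Prop) : measurable [set _ : O | Q].
Proof.
case: (pselect Q) => q.
  by rewrite (_ : [set _ | Q] = setT) //; apply/seteqP; split.
by rewrite (_ : [set _ | Q] = set0) //; apply/seteqP; split.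
Qed.

Lemma Hc_eq a N L : Hc a N L.+1 = Hc a N L `|` (Gk N L `&` [set _ | a * N%:R <= L%:R]).
Proof.
apply/seteqP; split => w; rewrite /Hc /Gk /=.
  move=> [+ h]; rewrite ltnS leq_eqVlt => /orP[/eqP e|l].
    by right; split => //; rewrite -e.
  by left.
move=> [[l h]|[e h]]; split => //; first by lia.
  by rewrite e.
by rewrite e.
Qed.

Lemma Hc_meas a N L : measurable (Hc a N L).
Proof.
elim: L => [|L IH].
  by rewrite (_ : Hc a N 0 = set0) //; apply/seteqP; split => w // [].
by rewrite Hc_eq; apply: measurableU => //; apply: measurableI;
  [exact: Gk_meas | exact: cst_meas].
Qed.

Lemma Hc_le a N L : expR (a * N%:R) * pr (Hc a N L) <=
  \sum_(0 <= k < L) expR k%:R * pr (Gk N k).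
Proof.
elim: L => [|L IH].
  by rewrite big_geq // (_ : Hc a N 0 = set0) ?pr0 ?mulr0 //; apply/seteqP; split => w // [].
have mG := Gk_meas N L.
rewrite Hc_eq prU //; first last.
- by apply/seteqP; split => w // [[+ _] [+ _]]; rewrite /Gk /= => l e; lia.
- by apply: measurableI => //; exact: cst_meas.
- exact: Hc_meas.
rewrite mulrDr big_nat_recr //=; apply: lerD => //.
case: (pselect (a * N%:R <= L%:R)) => h.
  rewrite (_ : [set _ | _] = setT) ?setIT; last by apply/seteqP; split.
  by apply: ler_wpM2r; [exact: pr_ge0 | rewrite ler_expR].
rewrite (_ : [set _ | _] = set0) ?setI0 ?pr0 ?mulr0; last by apply/seteqP; split.
by apply: mulr_ge0; [exact: expR_ge0 | exact: pr_ge0].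
Qed.

Definition Hs (a : R) N := [set w | a * N%:R <= (cnt N w)%:R].

Lemma Hs_eq a N : Hs a N = Hc a N N.+1.
Proof.
apply/seteqP; split => w; rewrite /Hs /Hc /= ?ltnS ?cnt_le //.
by case.
Qed.

Lemma Hs_meas a N : measurable (Hs a N).
Proof. rewrite Hs_eq; exact: Hc_meas. Qed.

Definition rr a := expR ((expR 1 - 1) * c - a).

Lemma Hs_le a N : pr (Hs a N) <= rr a ^+ N.
Proof.
have h := Hc_le a N N.+1; rewrite -Hs_eq in h.
have h2 := le_trans h (Mexp_le N N.+1).
have -> : pr (Hs a N) = expR (- (a * N%:R)) * (expR (a * N%:R) * pr (Hs a N)).
  by rewrite mulrA -expRD addNr expR0 mul1r.
apply: le_trans (ler_wpM2l (expR_ge0 _) h2) _.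
rewrite /rr expRD mulrC exprMn -mulNr expRM_natr; apply: ler_wpM2r.
  by apply: exprn_ge0; exact: expR_ge0.
apply: lerXn2r; rewrite ?inE ?expR_ge0 //; first by apply: le_trans qq_ge1.
  by rewrite nnegrE expR_ge0.
exact: expR_ge1Dx.
Qed.

Lemma eseries_le (u : nat -> R) (l : R) : (forall n, 0 <= u n) ->
  (forall n, \sum_(0 <= i < n) u i <= l) ->
  (\sum_(i <oo) (u i)%:E <= l%:E)%E.
Proof.
move=> u0 ul; apply: lime_le.
  by apply: is_cvg_nneseries => n _ _; rewrite lee_fin.
by apply: nearW => n; rewrite sumEFin lee_fin.
Qed.

Definition Bad a := \bigcap_M \bigcup_i Hs a (i + M).

Lemma Bad_meas a : measurable (Bad a).
Proof. by apply: bigcapT_measurable => M; apply: bigcupT_measurable => i; exact: Hs_meas. Qed.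

Lemma Bad_le a M : 0 < rr a < 1 -> pr (Bad a) <= rr a ^+ M / (1 - rr a).
Proof.
move=> /andP[r0 r1].
rewrite -lee_fin -prE; last exact: Bad_meas.
apply: le_trans (@measure_sigma_subadditive _ _ _ P (Bad a) (fun i => Hs a (i + M)) _ _ _) _.
- move=> i; exact: Hs_meas.
- exact: Bad_meas.
- by move=> w /(_ M I).
have -> : (\sum_(n <oo) P (Hs a (n + M)) = \sum_(n <oo) (pr (Hs a (n + M)))%:E)%E.
  by apply: congr_lim; apply/funext => n; apply: eq_bigr => i _; rewrite -prE //; exact: Hs_meas.
apply: eseries_le => [n|n]; first exact: pr_ge0.
apply: le_trans (geometric_le_lim n (exprn_ge0 M (ltW r0)) r0 _); last first.
  by rewrite ger0_norm // ltW.
rewrite /series /=; apply: ler_sum => i _.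
by rewrite -exprD addnC; apply: Hs_le.
Qed.

Lemma Bad0 a : 0 < rr a < 1 -> P (Bad a) = 0%E.
Proof.
move=> /[dup] rh /andP[r0 r1].
rewrite prE; last exact: Bad_meas.
congr (_%:E); apply/eqP; rewrite eq_le pr_ge0 andbT.
rewrite leNgt; apply/negP => b0.
have := cvg_geometric (1 - rr a)^-1 (z := rr a).
move=> /(_ _) /cvgr0_norm_lt /(_ _ b0) [|M _ HM].
  by rewrite ger0_norm // ltW.
have := HM M (leqnn M); have := Bad_le a M rh.
rewrite /geometric /= ger0_norm; last by apply: mulr_ge0; [rewrite invr_ge0; lra | apply: exprn_ge0; lra].
rewrite mulrC; lra.
Qed.

End chernoff.

Lemma limn_esup_le_ev {R : realType} (u : nat -> \bar R) N0 (l : \bar R) :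
  (forall n, (N0 <= n)%N -> (u n <= l)%E) -> (limn_esup u <= l)%E.
Proof.
move=> H; rewrite /limn_esup limf_esupE.
apply: le_trans (ereal_inf_lbound _) _.
  by exists [set n | (N0 <= n)%N]; [exists N0 | reflexivity].
by apply: ge_ereal_sup => _ [n hn <-]; exact: H.
Qed.

Lemma sum_le_j (j N : nat) : (\sum_(0 <= n < N) (n <= j)%N <= j.+1)%N.
Proof.
suff -> : (\sum_(0 <= n < N) (n <= j)%N = minn N j.+1)%N by apply: geq_minr.
elim: N => [|N IH]; first by rewrite big_geq.
rewrite big_nat_recr //= IH; case: (leqP N j) => h; lia.
Qed.

Lemma condbound {R : realType} {d dO} {T : measurableType d} {O : measurableType dO}
  (P : probability O R) (X : nat -> O -> T) (n : nat) (A : set T) (g : nat -> O -> R) (c : R) :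
  0 <= c -> is_cond_prob P X n A (g n) ->
  {ae P, forall w, exists2 b : R, b < c & forall n, g n w <= b} ->
  forall B, past_sigma X n B -> measurable B -> (P (X n @^-1` A `&` B) <= c%:E * P B)%E.
Proof.
move=> c0 [_ [gint gcond]] hae B hB mB; rewrite gcond //.
have [N0 [mN0 PN0 sub]] := hae.
have mBN : measurable (B `\` N0) by exact: measurableD.
rewrite (@negligible_integral _ _ _ P B N0 _ mN0 mB _ PN0); last first.
  exact: (@integrableS _ _ _ P setT B _ measurableT mB (subsetT _) gint).
apply: (@le_trans _ _ (\int[P]_(w in B `\` N0) (EFin \o cst c) w)%E).
  apply: le_integral.
  - exact: mBN.
  - exact: (@integrableS _ _ _ P setT _ _ measurableT mBN (subsetT _) gint).
  - exact: finite_measure_integrable_cst.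
  move=> w; rewrite inE => -[Bw nN0]; rewrite /= lee_fin.
  case: (pselect (exists2 b : R, b < c & forall n, g n w <= b)) => [[b bc gb]|ns].
    exact: le_trans (gb n) (ltW bc).
  by exfalso; apply: nN0; apply: sub.
rewrite (_ : EFin \o cst c = cst c%:E :> (O -> \bar R)) // integral_cst //; apply: lee_wpmul2l; first by rewrite lee_fin.
by apply: le_measure; rewrite ?inE //; exact: subDsetl.
Qed.

Lemma halfE {R : realType} (x y : R) : 0 < y -> y * (x / (2 * y)) = x / 2.
Proof. by move=> y0; field; lra. Qed.

Theorem lemma7 (R : realType) (d : measure_display) (T : measurableType d)
  (rho : T -> T -> R) (nu : {measure set T -> \bar R})
  (dO : measure_display) (O : measurableType dO) (P : probability O R)
  (X : nat -> O -> T) (rate : R -> R) :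
  is_metric rho ->
  (@measurable d T = <<s rho_open rho >>) ->
  (nu setT < +oo)%E ->
  (forall n, measurable_fun setT (X n)) ->
  unif_dominated_at_rate P X nu rate ->
  forall eps : R, 0 < eps ->
  exists X' : set T, bounded_diam rho X' /\
    forall Xt : nat -> O -> T, nn_process rho X Xt ->
      {ae P, forall w,
        (limn_esup (fun N : nat =>
           ((N%:R)^-1 * \sum_(1 <= n < N.+1)
              (asbool (~ X' (X n w) \/ ~ X' (Xt n w)))%:R)%:E) < eps%:E)%E}.
Proof.
move=> hrho hmeas hnu hX [hud _] eps eps0.
have [rho0 [rhoE [rhoC rhoT]]] := hrho.
case: (pselect (exists x : T, True)) => [[x0 _]|noT]; last first.
  exists set0; split; first by exists 0 => x y.
  move=> Xt _; exists set0; split => //.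
  by move=> w _; apply: noT; exists (X 0%N w).
pose e' := Num.min eps 1.
have e'0 : 0 < e' by rewrite lt_min eps0 ltr01.
have e'1 : e' <= 1 by rewrite ge_min lexx orbT.
have e'e : e' <= eps by rewrite ge_min lexx.
pose a := e' / 2.
have a0 : 0 < a by rewrite /a; lra.
have E1 : 0 < expR 1 - 1 :> R by have := e2 (R:=R); lra.
pose c := a / (2 * (expR 1 - 1)).
have c0 : 0 < c by apply: divr_gt0; lra.
have [delta d0 hdel] := hud c c0.
pose B (k : nat) := [set y | rho x0 y < k%:R].
have Bmeas k : measurable (B k).
  rewrite hmeas; apply: sub_gen_smallest => y /= yk.
  exists (k%:R - rho x0 y); first by rewrite subr_gt0.
  move=> z /= hz; have := rhoT x0 y z; rewrite /B /= in yk *; lra.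
have [K hK] : exists K, (nu (~` B K) < delta%:E)%E.
  have hcvg : (nu \o (fun k => ~` B k) @ \oo --> nu set0)%E.
    have -> : set0 = \bigcap_k ~` B k.
      apply/seteqP; split => // y /= H.
      apply: (H (Num.Def.archi_bound (rho x0 y)) I); rewrite /B /=.
      exact: archi_boundP.
    apply: nonincreasing_cvg_mu.
    - apply: le_lt_trans hnu; apply: le_measure; rewrite ?inE //; exact: measurableC.
    - move=> k; exact: measurableC.
    - by apply: bigcapT_measurable => k; exact: measurableC.
    - move=> n m nm; apply/subsetPset => y /= h1 h2; apply: h1.
      by apply: lt_le_trans h2 _; rewrite ler_nat.
  rewrite measure0 in hcvg.
  have [k _ hk] := cvgr0_norm_lt _ (fine_cvg hcvg) _ d0; exists k.
  have := hk k (leqnn k); rewrite /= ger0_norm ?fine_ge0 ?measure_ge0 //.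
  have fin : nu (~` B k) \is a fin_num.
    rewrite ge0_fin_numE ?measure_ge0 //; apply: le_lt_trans hnu.
    by apply: le_measure; rewrite ?inE //; exact: measurableC.
  by rewrite -lte_fin fineK.
pose A := ~` B K.
have mA : measurable A by exact: measurableC.
have [g [hg hae]] := hdel A mA hK.
pose G n := [set Bs : set O | exists i, (i < n)%N /\ exists2 A0, measurable A0 & Bs = X i @^-1` A0].
pose Y n := X n @^-1` A.
have hgen n : G n `<=` measurable.
  move=> _ [i [_ [A0 mA0 ->]]]; have := hX i measurableT A0 mA0; rewrite setTI //.
have hGm n : <<s G n>> `<=` measurable.
  apply: smallest_sub; [exact: sigma_algebra_measurable | exact: hgen].
have hmono n m : (n <= m)%N -> <<s G n>> `<=` <<s G m>>.
  move=> nm; apply: smallest_sub; first exact: smallest_sigma_algebra.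
  move=> _ [i [im [A0 mA0 ->]]]; apply: sub_gen_smallest; exists i; split; first by lia.
  by exists A0.
have hY n : <<s G n.+1>> (Y n).
  by apply: sub_gen_smallest; exists n; split => //; exists A.
have hc n Bs : <<s G n>> Bs -> (P (Y n `&` Bs) <= c%:E * P Bs)%E.
  move=> hB; apply: (@condbound _ _ _ _ _ P X n A g c (ltW c0) (hg n) hae) => //.
  exact: (hGm n _ hB).
have rr01 : 0 < rr c a < 1.
  rewrite /rr expR_gt0 /= expR_lt1.
  have -> : (expR 1 - 1) * c = a / 2.
    by rewrite /c halfE.
  lra.
have PBad := Bad0 P G Y c hGm hmono hY hc (ltW c0) a rr01.
pose X' := [set y | rho x0 y < 3 * K%:R].
exists X'; split.
  exists (6 * K%:R) => y z; rewrite /X' /= => hy hz.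
  have := rhoT y x0 z; rewrite (rhoC y x0); lra.
move=> Xt hnn.
exists (Bad Y a); split; [exact: (Bad_meas G Y c hGm hmono hY (ltW c0) a) | exact: PBad |].
move=> w /= hw; case: (pselect (Bad Y a w)) => // nB; exfalso; apply: hw.
have [M hM] : exists M, forall i, ~ Hs Y a (i + M) w.
  case: (pselect (exists M, forall i, ~ Hs Y a (i + M) w)) => // nM.
  exfalso; apply: nB => M _.
  case: (pselect (exists i, Hs Y a (i + M) w)) => [[i hi]|ni]; first by exists i.
  by exfalso; apply: nM; exists M => i hi; apply: ni; exists i.
have hM' N : (M <= N)%N -> (cnt Y N w)%:R < a * N%:R.
  move=> MN; have := hM (N - M)%N; rewrite subnK // /Hs /= => /negP.
  by rewrite -ltNge.
have [j hj] : exists j, B K (X j w).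
  case: (pselect (exists j, B K (X j w))) => // nj; exfalso.
  have allY n : Y n w by move=> h; apply: nj; exists n.
  have cntN N : cnt Y N w = N.
    elim: N => [|N IH]; first exact: cnt0.
    by rewrite cntS IH mem_set // addn1.
  have := hM' M (leqnn M); rewrite cntN.
  have : a * M%:R <= M%:R.
    by rewrite -[leRHS]mul1r ler_wpM2r //; rewrite /a; lra.
  lra.
have hb n : (0 < n)%N ->
    (asbool (~ X' (X n w) \/ ~ X' (Xt n w)) <= (w \in Y n) + (n <= j))%N.
  move=> n0; case: (asboolP (~ X' (X n w) \/ ~ X' (Xt n w))) => //= hbad.
  case: (pselect (Y n w)) => [yn|nyn]; first by rewrite mem_set.
  case: (leqP n j) => nj; first by rewrite addn1.
  exfalso.
  have hXn : rho x0 (X n w) < K%:R.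
    by case: (pselect (B K (X n w))) => // h; exfalso; apply: nyn.
  have [_ hmin] := hnn n w n0.
  have h1 := hmin j nj.
  have h2 := rhoT (X n w) x0 (X j w).
  have h3 := rhoT x0 (X n w) (Xt n w).
  have h4 : rho x0 (X j w) < K%:R by exact: hj.
  rewrite (rhoC (X n w) x0) in h2.
  have K0 : 0 <= K%:R :> R by [].
  case: hbad; rewrite /X' /=; lra.
have j0 : 0 <= j.+1%:R :> R by [].
pose N1 := Num.Def.archi_bound (2 * (a + j.+1%:R) / a).
have pos : 0 < 2 * (a + j.+1%:R) / a by apply: divr_gt0 => //; lra.
have hN1 : 2 * (a + j.+1%:R) / a < N1%:R by apply: archi_boundP; exact: ltW.
apply: le_lt_trans (@limn_esup_le_ev _ _ (maxn M N1) (3 * a / 2)%:E _) _; last first.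
  by rewrite lte_fin /a; lra.
move=> N; rewrite geq_max => /andP[MN N1N].
have NR : N1%:R <= N%:R :> R by rewrite ler_nat.
have N0 : 0 < N%:R :> R by lra.
have key : 2 * (a + j.+1%:R) < a * N%:R.
  by have := lt_le_trans hN1 NR; rewrite ltr_pdivrMr // [_ * a]mulrC.
have hsum : \sum_(1 <= n < N.+1) (asbool (~ X' (X n w) \/ ~ X' (Xt n w)))%:R
    <= (cnt Y N.+1 w)%:R + j.+1%:R :> R.
  rewrite -natr_sum -natrD ler_nat.
  apply: (@leq_trans (\sum_(1 <= n < N.+1) ((w \in Y n) + (n <= j)))).
    rewrite big_nat_cond [X in (_ <= X)%N]big_nat_cond.
    by apply: leq_sum => n /andP[/andP[n1 _] _]; exact: hb.
  apply: (@leq_trans (\sum_(0 <= n < N.+1) ((w \in Y n) + (n <= j)))).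
    by rewrite [X in (_ <= X)%N](big_ltn (ltn0Sn N)) leq_addl.
  rewrite big_split /= leq_add //; last exact: sum_le_j.
  by rewrite /cnt big_mkord.
have hcn := hM' N.+1 (leqW MN).
have hS : a * N.+1%:R = a * N%:R + a by rewrite -addn1 natrD mulrDr mulr1.
rewrite lee_fin ler_pdivrMl //; lra.

Qed.
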